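(* For every integer $n\geq1$, $\mathrm{C}_{\sharp\leq2}\nleq_W\mathrm{C}_{\sharp=n}$.
   Context: Represented spaces carry partial surjections $\delta:\subseteq\mathbb{N}^\mathbb{N}\to X$; a realizer $F$ of $f$ satisfies $\delta_YF(p)\in f(\delta_X(p))$ for $p\in\operatorname{dom}(f\delta_X)$. $f\leq_W g$ iff there are computable partial $K,H$ on Baire space such that $p\mapsto K\langle p,G(H(p))\rangle$ realizes $f$ for every realizer $G$ of $g$. Closed subsets of Cantor space are named by binary trees (set of infinite paths); $\mathrm{C}_{\sharp\leq m}$ is the restriction of $\mathrm{C}_{\{0,1\}^\mathbb{N}}$ (output any point of the closed set) to trees having exactly $m$ vertices at each level $k$ with $2^k\geq m$, and $\mathrm{C}_{\sharp=m}$ its further restriction to trees in which, from some finite depth on, every vertex has exactly one child. *)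

(* Defs.v *)
From mathcomp Require Import all_boot.
From Stdlib Require Import ProofIrrelevance FunctionalExtensionality.
Set Implicit Arguments. Unset Strict Implicit. Unset Printing Implicit Defensive.

Definition baire := nat -> nat.

Definition bpair (p q : baire) : baire :=
  fun n => if odd n then q n./2 else p n./2.

(** * Oracle (relative) partial mu-recursive functions. *)
Inductive code : Type :=
| CZero
| CSucc
| CProj of nat
| COracle
| CComp of code & list code
| CPrimRec of code & code
| CMu of code.

Inductive eval (o : baire) : code -> seq nat -> nat -> Prop :=
| ev_zero v : eval o CZero v 0
| ev_succ v : eval o CSucc v (head 0 v).+1
| ev_proj i v : eval o (CProj i) v (nth 0 v i)
| ev_oracle v : eval o COracle v (o (head 0 v))
| ev_comp f gs v ws y :
    evals o gs v ws -> eval o f ws y -> eval o (CComp f gs) v y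
| ev_rec0 f g v y : eval o f v y -> eval o (CPrimRec f g) (0 :: v) y
| ev_recS f g n v y z :
    eval o (CPrimRec f g) (n :: v) y -> eval o g (n :: y :: v) z ->
    eval o (CPrimRec f g) (n.+1 :: v) z
| ev_mu f v n :
    eval o f (n :: v) 0 ->
    (forall m, m < n -> exists k, 0 < k /\ eval o f (m :: v) k) ->
    eval o (CMu f) v n
with evals (o : baire) : list code -> seq nat -> seq nat -> Prop :=
| evs_nil v : evals o nil v [::]
| evs_cons g gs v w ws :
    eval o g v w -> evals o gs v ws -> evals o (g :: gs) v (w :: ws).

(** A partial function [F] on Baire space (undefined = [None]) is computable
    if some oracle machine [e], given oracle [p \in dom F], outputs
    [F p n] on input [n]. *)
Definition computes (e : code) (F : baire -> option baire) : Prop :=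
  forall p q, F p = Some q -> forall n, eval p e [:: n] (q n).

Definition computable (F : baire -> option baire) : Prop :=
  exists e, computes e F.

Record rep_space := RepSpace {
  carrier :> Type;
  delta : baire -> carrier -> Prop;
  delta_fun : forall p x y, delta p x -> delta p y -> x = y;
  delta_surj : forall x, exists p, delta p x
}.

(** Multi-valued functions (problems) f : X ⇉ Y as relations;
    dom f = { x | exists y, f x y }. *)
Definition problem (X Y : rep_space) := X -> Y -> Prop.

Definition realizes (X Y : rep_space) (F : baire -> option baire)
    (f : problem X Y) : Prop :=
  forall p x, delta p x -> (exists y, f x y) ->
    exists q, F p = Some q /\ exists y, delta q y /\ f x y.

(** Weihrauch reducibility:  p ↦ K<p, G(H(p))> realizes f for every
    realizer G of g. *)
Definition weihrauch_le (X Y U V : rep_space)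
    (f : problem X Y) (g : problem U V) : Prop :=
  exists K H : baire -> option baire,
    computable K /\ computable H /\
    forall G : baire -> option baire, realizes G g ->
      realizes (fun p => obind (fun q => obind (fun r => K (bpair p r)) (G q))
                                 (H p)) f.

Lemma cantor_fun (p : baire) (x y : nat -> bool) :
  (forall n, p n = nat_of_bool (x n)) -> (forall n, p n = nat_of_bool (y n)) ->
  x = y.
Proof.
move=> hx hy; apply: functional_extensionality => n.
by move: (hx n) (hy n) => -> /eqP; case: (x n); case: (y n).
Qed.

Lemma cantor_surj (x : nat -> bool) :
  exists p : baire, forall n, p n = nat_of_bool (x n).
Proof. by exists (fun n => nat_of_bool (x n)). Qed.

Definition cantor : rep_space :=
  @RepSpace (nat -> bool) (fun p x => forall n, p n = nat_of_bool (x n))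
    cantor_fun cantor_surj.

Record tree := Tree {
  tmem : seq bool -> bool;
  tree_closed : forall s b, tmem (rcons s b) -> tmem s
}.

Definition tree_delta (p : baire) (T : tree) : Prop :=
  (forall n, p n <= 1) /\ (forall s, p (pickle s) = nat_of_bool (tmem T s)).

Lemma tree_fun p T T' : tree_delta p T -> tree_delta p T' -> T = T'.
Proof.
case: T => t ht; case: T' => t' ht' [_ h] [_ h'] /=.
have E : t = t'.
  apply: functional_extensionality => s.
  by move: (h s) (h' s) => /= -> /eqP; case: (t s); case: (t' s).
subst t'; by rewrite (proof_irrelevance _ ht ht').
Qed.

Lemma tree_surj T : exists p, tree_delta p T.
Proof.
exists (fun n => if unpickle n is Some s then nat_of_bool (tmem T s) else 0).
split => [n|s]; last by rewrite pickleK.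
by case: (unpickle n) => // s; case: (tmem T s).
Qed.

Definition trees : rep_space := @RepSpace tree tree_delta tree_fun tree_surj.

Definition level_size (T : tree) (k : nat) : nat :=
  #|[pred t : k.-tuple bool | tmem T (val t)]|.

Definition is_path (T : tree) (x : nat -> bool) : Prop :=
  forall k, tmem T (mkseq x k).

Definition card_le_tree (m : nat) (T : tree) : Prop :=
  forall k, m <= 2 ^ k -> level_size T k = m.

Definition eventually_unary (T : tree) : Prop :=
  exists d, forall s, d <= size s -> tmem T s ->
    (nat_of_bool (tmem T (rcons s false)) + nat_of_bool (tmem T (rcons s true)) = 1)%N.

Definition C_sharp_le (m : nat) : problem trees cantor :=
  fun T x => card_le_tree m T /\ is_path T x.

Definition C_sharp_eq (m : nat) : problem trees cantor :=
  fun T x => card_le_tree m T /\ eventually_unary T /\ is_path T x.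

(* Main.v *)
Require Import Defs.
From mathcomp Require Import all_boot.
From Stdlib Require Import ClassicalEpsilon Classical FunctionalExtensionality.
Set Implicit Arguments. Unset Strict Implicit. Unset Printing Implicit Defensive.

Definition agree {A : Type} (f g : nat -> A) (n : nat) := forall i, i < n -> f i = g i.

Lemma agree_mono A (f g : nat -> A) n m : m <= n -> agree f g n -> agree f g m.
Proof. by move=> le h i hi; apply: h; apply: leq_trans le. Qed.

Lemma agree_sym A (f g : nat -> A) n : agree f g n -> agree g f n.
Proof. by move=> h i hi; rewrite h. Qed.

Lemma agree_trans A (f g k : nat -> A) n : agree f g n -> agree g k n -> agree f k n.
Proof. by move=> h1 h2 i hi; rewrite h1 // h2. Qed.

Lemma bound_fin (P : nat -> nat -> Prop) n :
  (forall m N N', N <= N' -> P m N -> P m N') ->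
  (forall m, m < n -> exists N, P m N) -> exists N, forall m, m < n -> P m N.
Proof.
move=> mono; elim: n => [|n IH] h; first by exists 0.
have [N1 h1] : exists N, forall m, m < n -> P m N.
  by apply: IH => m hm; apply: h; apply: ltnW.
have [N2 h2] := h n (ltnSn n).
exists (maxn N1 N2) => m; rewrite ltnS leq_eqVlt => /orP [/eqP->|hm].
  by apply: mono h2; rewrite leq_maxr.
by apply: mono (h1 m hm); rewrite leq_maxl.
Qed.

Lemma eval_cont o c v y : eval o c v y ->
  exists N, forall o', agree o' o N -> eval o' c v y
with evals_cont o cs v ws : evals o cs v ws ->
  exists N, forall o', agree o' o N -> evals o' cs v ws.
Proof.
- case=> {c v y}.
  + by move=> v; exists 0 => o' _; constructor.
  + by move=> v; exists 0 => o' _; constructor.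
  + by move=> i v; exists 0 => o' _; constructor.
  + move=> v; exists (head 0 v).+1 => o' h; rewrite -(h (head 0 v)) //; constructor.
  + move=> f gs v ws y hs hf.
    have [N1 h1] := evals_cont _ _ _ _ hs.
    have [N2 h2] := eval_cont _ _ _ _ hf.
    exists (maxn N1 N2) => o' h; econstructor.
      by apply: h1; apply: agree_mono h; rewrite leq_maxl.
    by apply: h2; apply: agree_mono h; rewrite leq_maxr.
  + move=> f g v y hf.
    have [N1 h1] := eval_cont _ _ _ _ hf.
    by exists N1 => o' h; constructor; apply: h1.
  + move=> f g n v y z h1 h2.
    have [N1 k1] := eval_cont _ _ _ _ h1.
    have [N2 k2] := eval_cont _ _ _ _ h2.
    exists (maxn N1 N2) => o' h; econstructor.
      by apply: k1; apply: agree_mono h; rewrite leq_maxl.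
    by apply: k2; apply: agree_mono h; rewrite leq_maxr.
  + move=> f v n h0 hlt.
    have hlt' : forall m, m < n -> exists k, 0 < k /\
        exists N, forall o', agree o' o N -> eval o' f (m :: v) k :=
      fun m hm => match hlt m hm with
        ex_intro k (conj hk he) => ex_intro _ k (conj hk (eval_cont _ _ _ _ he)) end.
    have [N1 k1] := eval_cont _ _ _ _ h0.
    have [N2 k2] : exists N, forall m, m < n -> exists k, 0 < k /\
        forall o', agree o' o N -> eval o' f (m :: v) k.
      apply: bound_fin.
        move=> m N N' le [k [hk hh]]; exists k; split => // o' ho.
        by apply: hh; apply: agree_mono ho.
      move=> m hm; have [k [hk [N hN]]] := hlt' m hm.
      by exists N; exists k.
    exists (maxn N1 N2) => o' h; constructor.
      by apply: k1; apply: agree_mono h; rewrite leq_maxl.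
    move=> m hm; have [k [hk hh]] := k2 m hm; exists k; split => //.
    by apply: hh; apply: agree_mono h; rewrite leq_maxr.
- case=> {cs v ws}.
  + by move=> v; exists 0 => o' _; constructor.
  + move=> g gs v w ws h1 h2.
    have [N1 k1] := eval_cont _ _ _ _ h1.
    have [N2 k2] := evals_cont _ _ _ _ h2.
    exists (maxn N1 N2) => o' h; constructor.
      by apply: k1; apply: agree_mono h; rewrite leq_maxl.
    by apply: k2; apply: agree_mono h; rewrite leq_maxr.
Qed.
Lemma inv_mu o f v n : eval o (CMu f) v n ->
  eval o f (n :: v) 0 /\ forall m, m < n -> exists k, 0 < k /\ eval o f (m :: v) k.
Proof. by move=> h; inversion h. Qed.

Lemma eval_det o c v y : eval o c v y -> forall y', eval o c v y' -> y = y'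
with evals_det o cs v ws : evals o cs v ws -> forall ws', evals o cs v ws' -> ws = ws'.
Proof.
- case=> {c v y}.
  + by move=> v y' h; inversion h.
  + by move=> v y' h; inversion h.
  + by move=> i v y' h; inversion h.
  + by move=> v y' h; inversion h.
  + move=> f gs v ws y hs hf y' h; inversion h; subst.
    match goal with H : evals _ _ _ ?w |- _ =>
      have E := evals_det _ _ _ _ hs _ H; subst end.
    match goal with H : eval _ _ _ y' |- _ => exact: (eval_det _ _ _ _ hf _ H) end.
  + move=> f g v y hf y' h; inversion h; subst.
    match goal with H : eval _ f _ y' |- _ => exact: (eval_det _ _ _ _ hf _ H) end.
  + move=> f g n v y z h1 h2 y' h; inversion h; subst.
    match goal with H : eval _ (CPrimRec _ _) _ _ |- _ =>
      have E := eval_det _ _ _ _ h1 _ H; subst end.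
    match goal with H : eval _ g _ y' |- _ => exact: (eval_det _ _ _ _ h2 _ H) end.
  + move=> f v n h0 hlt.
    have hlt' : forall m, m < n -> exists k, 0 < k /\
        forall y', eval o f (m :: v) y' -> k = y' :=
      fun m hm => match hlt m hm with
        ex_intro k (conj hk he) => ex_intro _ k (conj hk (eval_det _ _ _ _ he)) end.
    move=> n' /inv_mu [H1 H2].
    case: (ltngtP n n') => // hnn.
      have [k [hk he]] := H2 n hnn.
      by have := eval_det _ _ _ _ h0 _ he => E; rewrite -E in hk.
    have [k [hk he]] := hlt' n' hnn.
    by have := he _ H1 => E; rewrite E in hk.
- case=> {cs v ws}.
  + by move=> v ws' h; inversion h.
  + move=> g gs v w ws h1 h2 ws' h; inversion h; subst.
    match goal with H : eval _ _ _ _, H' : evals _ _ _ _ |- _ =>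
    by rewrite (eval_det _ _ _ _ h1 _ H) (evals_det _ _ _ _ h2 _ H') end.
Qed.

Lemma comp_cont e F p q : computes e F -> F p = Some q ->
  forall N, exists M, forall p' q', F p' = Some q' -> agree p' p M -> agree q' q N.
Proof.
move=> hc hF; elim=> [|N [M hM]]; first by exists 0 => p' q' _ _ i.
have [M2 hM2] := eval_cont (hc _ _ hF N).
exists (maxn M M2) => p' q' hF' ha i; rewrite ltnS leq_eqVlt => /orP [/eqP->|hi].
  apply: (eval_det (hc _ _ hF' N)); apply: hM2.
  by apply: agree_mono ha; rewrite leq_maxr.
by apply: (hM p') => //; apply: agree_mono ha; rewrite leq_maxl.
Qed.

Lemma rconsI (s1 s2 : seq bool) x1 x2 : rcons s1 x1 = rcons s2 x2 -> s1 = s2 /\ x1 = x2.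
Proof. by move=> h; case: (rcons_inj h) => -> ->. Qed.

Definition stepLR (o : option bool) (ab : seq bool * seq bool) :=
  match o with
  | None => (rcons ab.1 false, rcons ab.2 false)
  | Some true => (rcons ab.2 false, rcons ab.2 true)
  | Some false => (rcons ab.1 false, rcons ab.1 true)
  end.

Fixpoint LR (e : nat -> option bool) k :=
  match k with 0 => ([:: false], [:: true]) | k'.+1 => stepLR (e k') (LR e k') end.

Definition memT e (s : seq bool) :=
  if s is [::] then true else ((s == (LR e (size s).-1).1) || (s == (LR e (size s).-1).2)).

Lemma LR_size e k : size (LR e k).1 = k.+1 /\ size (LR e k).2 = k.+1.
Proof.
elim: k => [|k [h1 h2]] //=.
by case: (e k) => [[]|] /=; rewrite !size_rcons ?h1 ?h2.
Qed.

Lemma LR_neq e k : (LR e k).1 != (LR e k).2.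
Proof.
elim: k => [|k IH] //=.
case: (e k) => [[]|] /=.
- by apply/eqP => /rconsI [].
- by apply/eqP => /rconsI [].
by apply/eqP => /rconsI [] E; move: IH; rewrite E eqxx.
Qed.

Lemma memT_closed e s b : memT e (rcons s b) -> memT e s.
Proof.
case: s => [|x s] //; rewrite /memT size_rcons /=.
case: (e (size s)) => [[]|] /=; rewrite -!rcons_cons => /orP [] /eqP /rconsI [] -> _; by rewrite eqxx ?orbT.
Qed.

Definition Te e : tree := @Tree (memT e) (@memT_closed e).

Definition pn e : baire :=
  fun n => if @unpickle (seq bool) n is Some s then nat_of_bool (memT e s) else 0.

Lemma pn_delta e : tree_delta (pn e) (Te e).
Proof.
split => [n|s]; last by rewrite /pn pickleK.
by rewrite /pn; case: unpickle => // s; case: memT.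
Qed.

Lemma LR_agree e e' k : agree e e' k -> LR e k = LR e' k.
Proof.
elim: k => [|k IH] h //=; rewrite IH ?h //.
by apply: agree_mono h.
Qed.

Lemma memT_agree e e' s : agree e e' (size s) -> memT e s = memT e' s.
Proof.
case: s => [|x s] // h; rewrite /memT /= (@LR_agree e e') //.
by apply: agree_mono h.
Qed.

Lemma pn_agree N : exists M, forall e e', agree e e' M -> agree (pn e) (pn e') N.
Proof.
elim: N => [|N [M hM]]; first by exists 0 => e e' _ i.
exists (maxn M (size (odflt [::] (@unpickle (seq bool) N)))) => e e' h i.
rewrite ltnS leq_eqVlt => /orP [/eqP->|hi].
  rewrite /pn; case E: unpickle => [s|] //; rewrite (@memT_agree e e') //.
  by apply: agree_mono h; rewrite E leq_maxr.
by apply: hM => //; apply: agree_mono h; rewrite leq_maxl.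
Qed.

Lemma Te_card e : card_le_tree 2 (Te e).
Proof.
move=> k hk; case: k hk => [|k] // _.
rewrite /level_size /=.
have [s1 s2] := LR_size e k.
set a := (LR e k).1 in s1 *; set b := (LR e k).2 in s2 *.
have ha : size a == k.+1 by rewrite s1.
have hb : size b == k.+1 by rewrite s2.
have hab : Tuple ha != Tuple hb.
  by apply/eqP => /(congr1 val) /= /eqP; apply/negP; apply: LR_neq.
transitivity #|[set Tuple ha; Tuple hb]|; last by rewrite cards2 hab.
apply: eq_card => t; rewrite !inE /memT /=.
case: t => [[|x s] /= hs]; first by [].
have E : size s = k by apply/eqP; exact: hs.
by rewrite E -/a -/b -!val_eqE.
Qed.

Definition unary_from (d : nat) (T : tree) := forall s, d <= size s -> tmem T s ->
  (nat_of_bool (tmem T (rcons s false)) + nat_of_bool (tmem T (rcons s true)) = 1)%N.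

Lemma tmem_take T t k : tmem T t -> tmem T (take k t).
Proof.
elim/last_ind: t k => [|t x IH] k h; first by [].
rewrite -cats1 take_cat; case: ifP => hk.
  by apply: IH; apply: tree_closed h.
case: (k - size t) => [|j] /=; first by rewrite cats0; apply: tree_closed h.
by rewrite cats1.
Qed.

Definition good T s := forall m, exists u, size u = m /\ tmem T (s ++ u).

Lemma good_child T s : good T s -> exists b, good T (rcons s b).
Proof.
move=> g; apply: NNPP => hn.
have h0 : ~ good T (rcons s false) by move=> h; apply: hn; exists false.
have h1 : ~ good T (rcons s true) by move=> h; apply: hn; exists true.
have [m0 hm0] : exists m, forall u, size u = m -> ~ tmem T (rcons s false ++ u).
  apply: NNPP => hh; apply: h0 => m; apply: NNPP => hh2; apply: hh; exists m => u hu ht.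
  by apply: hh2; exists u.
have [m1 hm1] : exists m, forall u, size u = m -> ~ tmem T (rcons s true ++ u).
  apply: NNPP => hh; apply: h1 => m; apply: NNPP => hh2; apply: hh; exists m => u hu ht.
  by apply: hh2; exists u.
have [u [hu ht]] := g (maxn m0 m1).+1.
case: u hu ht => [|b u] //= [hu]; rewrite -cat_rcons => ht.
have := tmem_take (size (rcons s b) + (if b then m1 else m0)) ht.
rewrite take_cat ltnNge leq_addr /= addKn.
case: b ht => ht.
  by apply: hm1; rewrite size_takel // hu leq_maxr.
by apply: hm0; rewrite size_takel // hu leq_maxl.
Qed.

Lemma konig T s : good T s -> exists y, is_path T y /\ mkseq y (size s) = s.
Proof.
move=> g.
pose cb x := if excluded_middle_informative (good T (rcons x true)) then true else false.
pose fix c k := if k is k'.+1 then rcons (c k') (cb (c k')) else s.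
have cgood : forall k, good T (c k).
  elim=> [|k IH] //=; rewrite /cb; case: excluded_middle_informative => // hn.
  have [b hb] := good_child IH; case: b hb => // hb.
have csize : forall k, size (c k) = size s + k.
  by elim=> [|k IH] /=; rewrite ?addn0 // size_rcons IH addnS.
have cpre : forall k l, exists u, c (k + l) = c k ++ u.
  move=> k; elim=> [|l [u hu]]; first by exists [::]; rewrite addn0 cats0.
  by exists (rcons u (cb (c (k + l)))); rewrite addnS /= hu rcons_cat.
pose y i := nth false (c i.+1) i.
have ny : forall M i, i < M -> nth false (c M) i = y i.
  move=> M i hi; have [u hu] := cpre i.+1 (M - i.+1).
  rewrite subnKC // in hu; rewrite hu nth_cat csize.
  by rewrite (leq_trans (ltnSn i)) // leq_addl.
have my : forall k, mkseq y k = take k (c k).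
  move=> k; apply: (@eq_from_nth _ false).
    by rewrite size_mkseq size_takel // csize leq_addl.
  move=> i; rewrite size_mkseq => hi; rewrite nth_mkseq // nth_take //.
  by rewrite ny.
exists y; split.
  move=> k; rewrite my; apply: tmem_take.
  by have [u [hu ht]] := cgood k 0; case: u hu ht => // _; rewrite cats0.
have [u hu] := cpre 0 (size s); rewrite add0n in hu.
by rewrite my hu take_size_cat.
Qed.

Lemma child_bit T t b :
  (nat_of_bool (tmem T (rcons t false)) + nat_of_bool (tmem T (rcons t true)) = 1)%N ->
  tmem T (rcons t b) -> b = tmem T (rcons t true).
Proof. by case: b => // h1 h2; move: h1; rewrite h2; case: (tmem T (rcons t true)). Qed.

Lemma good_unary T s : tmem T s -> unary_from (size s) T -> good T s.
Proof.
move=> hs hu; elim=> [|m [u [hsz ht]]]; first by exists [::]; rewrite cats0.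
have h1 := hu (s ++ u); rewrite size_cat leq_addr in h1; have {}h1 := h1 isT ht.
exists (rcons u (tmem T (rcons (s ++ u) true))); rewrite size_rcons hsz -rcons_cat; split => //.
by case E: (tmem T (rcons (s ++ u) true)) => //; move: h1; rewrite E; case: tmem.
Qed.

Lemma Te_good e : good (Te e) [::].
Proof.
case=> [|m]; first by exists [::].
exists (LR e m).1; split; first by case: (LR_size e m).
have [hs _] := LR_size e m.
rewrite /= /memT; case E: (LR e m).1 hs => [|x s] //= [hs].
by rewrite hs E eqxx.
Qed.

Definition nm (y : nat -> bool) : baire := fun i => nat_of_bool (y i).

Lemma take_mkseq (f : nat -> bool) k m : k <= m -> take k (mkseq f m) = mkseq f k.
Proof.
move=> h; rewrite -(subnKC h) /mkseq iotaD map_cat take_size_cat //.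
by rewrite size_map size_iota.
Qed.

Lemma tmem_agree q T q' T' t : tree_delta q T -> tree_delta q' T' ->
  q' (pickle t) = q (pickle t) -> tmem T' t = tmem T t.
Proof.
move=> [_ h] [_ h']; rewrite h h'.
by case: (tmem T t); case: (tmem T' t).
Qed.

Lemma bound (f : nat -> nat) NK : exists N, forall i, i < NK -> f i < N.
Proof.
elim: NK => [|k [N hN]]; first by exists 0.
exists (maxn N (f k).+1) => i; rewrite ltnS leq_eqVlt => /orP [/eqP->|hi].
  by rewrite leq_max ltnSn orbT.
by rewrite leq_max hN.
Qed.

Lemma bpair_agree p p' r r' N : agree p' p N -> agree r' r N ->
  agree (bpair p' r') (bpair p r) N.
Proof.
move=> hp hr k hk; rewrite /bpair.
have hk2 : k./2 < N.
  rewrite ltn_half_double; apply: leq_trans hk _; rewrite -addnn leq_addr //.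
by case: ifP => _; [rewrite hr | rewrite hp].
Qed.

Definition stinv (e : nat -> option bool) m := forall k, m <= k -> e k = None.

Lemma LR_straight e m l : stinv e m ->
  LR e (m + l) = ((LR e m).1 ++ nseq l false, (LR e m).2 ++ nseq l false).
Proof.
move=> hi; elim: l => [|l IH]; first by rewrite addn0 !cats0; case: (LR e m).
have nr : forall j, nseq j false ++ [:: false] = nseq j.+1 false.
  by elim=> //= j ->.
by rewrite addnS /= hi ?leq_addr // IH /= -!cats1 -!catA !nr.
Qed.

Lemma memT_size e t k : size t = k.+1 ->
  memT e t = (t == (LR e k).1) || (t == (LR e k).2).
Proof. by case: t => // x t [E]; rewrite /memT /= E. Qed.

Section Main.
Variables (n : nat) (H K : baire -> option baire) (eH eK : code).
Hypothesis cH : computes eH H.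
Hypothesis cK : computes eK K.

Definition compo (G : baire -> option baire) :=
  fun p => obind (fun q => obind (fun r => K (bpair p r)) (G q)) (H p).

Hypothesis HR : forall G, realizes G (C_sharp_eq n) -> realizes (compo G) (C_sharp_le 2).

Definition G0P (q : baire) :=
  exists r, exists T, tree_delta q T /\ exists y, (forall i, r i = nat_of_bool (y i)) /\
     C_sharp_eq n T y.

Definition G0 (q : baire) : option baire :=
  match excluded_middle_informative (G0P q) with
  | left h => Some (proj1_sig (constructive_indefinite_description _ h))
  | right _ => None end.

Lemma G0_some q r : G0 q = Some r -> exists T, tree_delta q T /\
  exists y, (forall i, r i = nat_of_bool (y i)) /\ C_sharp_eq n T y.
Proof.
rewrite /G0; case: excluded_middle_informative => // h [<-].
exact: proj2_sig (constructive_indefinite_description _ h).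
Qed.

Lemma G0_real : realizes G0 (C_sharp_eq n).
Proof.
move=> q T dq [y hy]; rewrite /G0; case: excluded_middle_informative => h.
  eexists; split; first by reflexivity.
  case: (proj2_sig (constructive_indefinite_description _ h)) => T' [dT' [y' [h1 h2]]].
  have E := tree_fun dq dT'; subst T'.
  by exists y'; split.
exfalso; apply: h; exists (nm y), T; split => //; by exists y; split.
Qed.

Lemma at_tree e G : realizes G (C_sharp_eq n) -> exists q r w z,
  H (pn e) = Some q /\ G q = Some r /\ K (bpair (pn e) r) = Some w /\
  (forall i, w i = nat_of_bool (z i)) /\ is_path (Te e) z.
Proof.
move=> hG.
have hdom : exists y, C_sharp_le 2 (Te e) y.
  have [y [py _]] := konig (Te_good e).
  by exists y; split => //; apply: Te_card.
have [w [hw [z [dz [_ pz]]]]] := HR hG (pn_delta e) hdom.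
move: hw; rewrite /compo; case E: (H (pn e)) => [q|] //=.
case E2: (G q) => [r|] //= hk.
by exists q, r, w, z.
Qed.

Lemma H_agree e1 q N : H (pn e1) = Some q -> exists M, forall e' q',
  agree e' e1 M -> H (pn e') = Some q' -> agree q' q N.
Proof.
move=> hq; have [N1 h1] := comp_cont cH hq N.
have [M hM] := pn_agree N1.
exists M => e' q' ha hq'; apply: h1 hq' _.
exact: hM.
Qed.

Definition Defeat (s : seq bool) e2 m2 := forall e', agree e' e2 m2 ->
  forall q' T', H (pn e') = Some q' -> tree_delta q' T' -> tmem T' s ->
  unary_from (size s) T' -> forall y', is_path T' y' -> mkseq y' (size s) = s ->
  forall w' z', K (bpair (pn e') (nm y')) = Some w' ->
  (forall i, w' i = nat_of_bool (z' i)) -> ~ is_path (Te e') z'.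

Lemma stageB e1 m1 s q Tq : stinv e1 m1 -> H (pn e1) = Some q -> tree_delta q Tq ->
  card_le_tree n Tq -> tmem Tq s -> unary_from (size s) Tq -> exists e2 m2,
  m1 < m2 /\ agree e2 e1 m1 /\ stinv e2 m2 /\ Defeat s e2 m2.
Proof.
move=> hinv hq dq cardq hs hu.
  have [y [py my]] := konig (good_unary hs hu).
  pose G1 q' := if excluded_middle_informative (q' = q) then Some (nm y) else G0 q'.
  have hG1 : realizes G1 (C_sharp_eq n).
    move=> q' T' dq' hdom; rewrite /G1; case: excluded_middle_informative => hqq.
      subst q'; have E := tree_fun dq dq'; subst T'.
      exists (nm y); split => //; exists y; split => //; split => //; split => //.
      by exists (size s).
    exact: G0_real dq' hdom.
  have [q1 [r [w [z [hq1 [hr [hKw [dz pz]]]]]]]] := at_tree e1 hG1.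
  move: hq1; rewrite hq => -[E]; subst q1.
  move: hr; rewrite /G1; case: excluded_middle_informative => // _ [E]; subst r.
  pose A := mkseq z m1.+1.
  have hA : (A == (LR e1 m1).1) || (A == (LR e1 m1).2).
    have := pz m1.+1; rewrite /= /memT -/A.
    by case EA: A => [|x a] //; rewrite -EA size_map size_iota.
  have [NK hK] := comp_cont cK hKw m1.+1.
  have [Mp hMp] := pn_agree NK.
  have [Nq hNq] := bound (fun i => pickle (rcons (mkseq y i) true)) NK.
  have [MH hMH] := H_agree Nq hq.
  pose Lz := maxn m1 (maxn Mp MH).
  pose bk := A == (LR e1 m1).1.
  pose e2 := fun k => if k == Lz then Some bk else e1 k.
  have hm1 : m1 <= Lz by rewrite leq_maxl.
  have a21 : agree e2 e1 Lz.
    by move=> k hk; rewrite /e2; case: eqP => // E; rewrite E ltnn in hk.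
  exists e2, Lz.+1; split; first by rewrite ltnS.
  split; first by apply: agree_mono a21.
  split.
    move=> k hk; rewrite /e2; case: eqP => [E|_]; first by rewrite E ltnn in hk.
    by apply: hinv; apply: leq_trans hk; apply: leqW.
  move=> e' ha q' T' hH' dT' hs' hu' y' py' my' w' z' hK' hz' pz'.
  have a1 : agree e' e1 Lz.
    apply: (agree_trans _ a21); apply: agree_mono ha; exact: leqnSn.
  have aq : agree q' q Nq.
    apply: (hMH e') => //; apply: agree_mono a1; rewrite leq_max leq_maxr orbT //.
  have myy : forall k, k <= NK -> mkseq y' k = mkseq y k.
    elim=> [|k IH] hk //; rewrite !mkseqS IH ?(ltnW hk) //; congr rcons.
    case: (ltnP k (size s)) => hks.
      by rewrite -(nth_mkseq false y' hks) -(nth_mkseq false y hks) my my'.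
    have ht' := py' k.+1; rewrite mkseqS IH ?(ltnW hk) // in ht'.
    have ht := py k.+1; rewrite mkseqS in ht.
    rewrite (child_bit (hu' _ _ _) ht') ?size_mkseq ?IH ?(ltnW hk) //; last by rewrite -IH ?(ltnW hk).
    rewrite (child_bit (hu _ _ (py k)) ht) ?size_mkseq //.
    apply: (tmem_agree dq dT'); apply: aq; exact: hNq.
  have ay : agree (nm y') (nm y) NK.
    move=> i hi; rewrite /nm -(nth_mkseq false y' hi) -(nth_mkseq false y hi) myy //.
  have ap : agree (pn e') (pn e1) NK.
    apply: hMp; apply: agree_mono a1; rewrite leq_max leq_maxl orbT //.
  have aw := hK _ _ hK' (bpair_agree ap ay).
  have mz : mkseq z' m1.+1 = A.
    apply: (@eq_from_nth _ false); first by rewrite !size_mkseq.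
    move=> i; rewrite size_mkseq => hi; rewrite !nth_mkseq //.
    have := aw i hi; rewrite hz' dz; by case: (z' i); case: (z i).
  have hz2 : memT e' (mkseq z' Lz.+2) := pz' Lz.+2.
  have htk : take m1.+1 (mkseq z' Lz.+2) = A.
    by rewrite take_mkseq // ltnS; apply: leqW.
  have LRe : LR e' Lz.+1 = stepLR (Some bk) (LR e1 Lz).
    rewrite (@LR_agree e' e2) //= /e2 eqxx (@LR_agree e2 e1) //.
  have [sA0 sB0] := LR_size e1 m1.
  have hne := LR_neq e1 m1.
  have LS := @LR_straight e1 m1 (Lz - m1) hinv; rewrite subnKC // in LS.
  move: hz2; rewrite (@memT_size _ _ Lz.+1) ?size_mkseq // LRe LS.
  rewrite /bk; case hb: (A == (LR e1 m1).1) => /=.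
    case/orP => /eqP E; move: htk; rewrite E rcons_cat take_size_cat // => EA;
      by move: hb hne; rewrite -EA => /eqP ->; rewrite eqxx.
  case/orP => /eqP E; move: htk; rewrite E rcons_cat take_size_cat // => EA;
    by move: hb; rewrite -EA eqxx.
Qed.

Lemma stage e1 m1 s : stinv e1 m1 -> exists e2 m2,
  m1 < m2 /\ agree e2 e1 m1 /\ stinv e2 m2 /\ Defeat s e2 m2.
Proof.
move=> hinv.
have [q [r0 [w0 [z0 [hq [hr0 _]]]]]] := at_tree e1 G0_real.
have [Tq [dq [y0 [_ [cardq _]]]]] := G0_some hr0.
case: (classic (tmem Tq s /\ unary_from (size s) Tq)) => [[hs hu]|hnot].
  exact: stageB hinv hq dq cardq hs hu.
have [N hN] : exists N, forall q' T', tree_delta q' T' -> agree q' q N ->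
    ~ (tmem T' s /\ unary_from (size s) T').
  case: (boolP (tmem Tq s)) => hs.
    have [t ht] : exists t, ~ (size s <= size t -> tmem Tq t ->
       (nat_of_bool (tmem Tq (rcons t false)) + nat_of_bool (tmem Tq (rcons t true)) = 1)%N).
      by apply: not_all_ex_not => hu; apply: hnot; split.
    have ht1 : size s <= size t.
      by apply: NNPP => hh; apply: ht => h1; case: (hh h1).
    have ht2 : tmem Tq t.
      by apply: NNPP => hh; apply: ht => _ h1; case: (hh h1).
    have ht3 : (nat_of_bool (tmem Tq (rcons t false)) + nat_of_bool (tmem Tq (rcons t true)) <> 1)%N.
      by move=> hh; apply: ht.
    exists (maxn (pickle t) (maxn (pickle (rcons t false)) (pickle (rcons t true)))).+1.
    move=> q' T' dT' ha [_ hu']; apply: ht3.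
    rewrite -!(tmem_agree dq dT') ?ha // ?ltnS ?leq_max ?leqnn ?orbT //.
    apply: hu' => //; rewrite (tmem_agree dq dT') ?ha // ltnS leq_max leqnn //.
  exists (pickle s).+1 => q' T' dT' ha [hs' _]; move: hs.
  by rewrite -(tmem_agree dq dT') ?ha // hs'.
have [M hM] := H_agree N hq.
exists e1, (maxn m1 M).+1; split; first by rewrite ltnS leq_maxl.
split; first by [].
split; first by move=> k hk; apply: hinv; apply: leq_trans hk; rewrite leqW // leq_maxl.
move=> e' ha q' T' hH' dT' hs' hu'.
exfalso; apply: (hN q' T' dT') => //.
apply: (hM e') => //; apply: agree_mono ha; rewrite leqW // leq_maxr //.
Qed.

Definition cand j : seq bool := odflt [::] (@unpickle (seq bool) j).

Lemma main_false : False.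
Proof.
have hst : forall (j : nat) (x : (nat -> option bool) * nat),
    exists x' : (nat -> option bool) * nat, stinv x.1 x.2 ->
    x.2 < x'.2 /\ agree x'.1 x.1 x.2 /\ stinv x'.1 x'.2 /\ Defeat (cand j) x'.1 x'.2.
  move=> j x; case: (classic (stinv x.1 x.2)) => hx; last by exists x.
  have [e2 [m2 h]] := stage (cand j) hx.
  by exists (e2, m2).
pose nxt j x := proj1_sig (constructive_indefinite_description _ (hst j x)).
have nxtP : forall j x, stinv x.1 x.2 -> x.2 < (nxt j x).2 /\ agree (nxt j x).1 x.1 x.2 /\
    stinv (nxt j x).1 (nxt j x).2 /\ Defeat (cand j) (nxt j x).1 (nxt j x).2.
  move=> j x hx; exact: (proj2_sig (constructive_indefinite_description _ (hst j x)) hx).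
pose fix X j := if j is j'.+1 then nxt j' (X j') else ((fun _ => None), 0).
have Xinv : forall j, stinv (X j).1 (X j).2 /\ j <= (X j).2.
  elim=> [|j [IH1 IH2]]; first by split.
  have [h1 [h2 [h3 h4]]] := nxtP j (X j) IH1.
  by split => //=; apply: leq_ltn_trans h1.
have Xp : forall j, (X j).2 < (X j.+1).2 /\ agree (X j.+1).1 (X j).1 (X j).2 /\
    Defeat (cand j) (X j.+1).1 (X j.+1).2.
  move=> j; have [h1 [h2 [h3 h4]]] := nxtP j (X j) (proj1 (Xinv j)); by split.
have Xmono : forall j l, agree (X (j + l)).1 (X j).1 (X j).2 /\ (X j).2 <= (X (j + l)).2.
  move=> j; elim=> [|l [IH1 IH2]]; first by rewrite addn0.
  have [h1 [h2 _]] := Xp (j + l); rewrite addnS; split.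
    apply: (agree_trans _ IH1); apply: agree_mono h2 => //.
  by apply: leq_trans IH2 (ltnW h1).
pose es k := (X k.+1).1 k.
have Eagr : forall j, agree es (X j).1 (X j).2.
  move=> j k hk; rewrite /es; case: (leqP k.+1 j) => hkj.
    have [h1 _] := Xmono k.+1 (j - k.+1); rewrite subnKC // in h1.
    by rewrite h1 // (leq_trans _ (proj2 (Xinv k.+1))).
  have [h1 _] := Xmono j (k.+1 - j); rewrite subnKC // in h1; last by apply: ltnW.
  by rewrite h1.
have [q [r [w [z [hq [hr [hKw [dz pz]]]]]]]] := at_tree es G0_real.
have [T [dq [y [dy [_ [[d hd] py]]]]]] := G0_some hr.
have Er : r = nm y by apply: functional_extensionality => i; rewrite dy.
subst r.
pose s := mkseq y d.
have hc : cand (pickle s) = s by rewrite /cand pickleK.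
have [_ [_ hD]] := Xp (pickle s).
rewrite hc in hD.
have hu : unary_from (size s) T by move=> t; rewrite size_mkseq; apply: hd.
have ms : mkseq y (size s) = s by rewrite size_mkseq.
exact: (hD es (Eagr _) q T hq dq (py d) hu y py ms w z hKw dz pz).
Qed.

End Main.

Theorem corollary24 (n : nat) : 1 <= n ->
  ~ weihrauch_le (C_sharp_le 2) (C_sharp_eq n).
Proof.
move=> _ [K [H [[eK cK] [[eH cH] hR]]]].
exact: (main_false cH cK hR).
Qed.
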